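(* Let $\gamma$ be a norm on $\mathbb{R}^d$, let $D\subset\mathbb{R}^d$ be finite with positive weights $w_d$, and $w_D=\sum_{d\in D}w_d$. Then for every $m\in\mathrm{EH}_\gamma(D)$ there exist $c\in\mathbb{R}^d$ and $w_c\in(0,w_D)$ such that $m$ is a Fermat–Weber point of the weighted set $(D,w)+(c,w_c)$.
   Context: A norm is a symmetric gauge: the Minkowski functional $\gamma$ of a convex compact set $B_\gamma$, symmetric about and containing the origin in its interior. $\gamma^\circ$ is the dual norm, $B_{\gamma^\circ}$ its unit ball. A Fermat–Weber point of a finite positively weighted set $(S,u)$ is a minimizer of $x\mapsto\sum_{s\in S}u_s\gamma(x-s)$. For weighted sets, $(D,w)+(C,v)$ denotes the weighted set $D\cup C$ with weight $w_x+v_x$ at $x$ (where $w_x=0$ for $x\notin D$ and $v_x=0$ for $x\notin C$). For $p\in B_{\gamma^\circ}$: if $\gamma^\circ(p)=1$, $N(p)$ is the cone $\mathbb{R}_{\ge0}F(p)$ generated by the exposed face $F(p)=\{x\in B_\gamma:\langle p,x\rangle=1\}$; if $\gamma^\circ(p)<1$, $N(p)=\{0\}$. For finite $S$ and $\pi=(p_s)_{s\in S}\subset B_{\gamma^\circ}$, $C_\pi=\bigcap_{s\in S}(s+N(p_s))$; a nonempty $C_\pi$ is an elementary convex set for $S$. The elementary hull $\mathrm{EH}_\gamma(S)$ is the union of all bounded elementary convex sets for $S$. *)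

(* Defs.v *)
From HB Require Import structures.
From mathcomp Require Import all_boot all_order all_algebra.
From mathcomp Require Import classical_sets reals.
Set Implicit Arguments. Unset Strict Implicit. Unset Printing Implicit Defensive.
Import Order.TTheory GRing.Theory Num.Theory.
Local Open Scope ring_scope.
Local Open Scope classical_set_scope.

Section Defs.
Variables (R : realType) (d : nat).
Notation V := 'rV[R]_d.

Definition ip (p x : V) : R := \sum_(i < d) p ord0 i * x ord0 i.

Definition is_norm (gamma : V -> R) : Prop :=
  [/\ forall x, gamma x = 0 -> x = 0,
      forall (a : R) x, gamma (a *: x) = `|a| * gamma x
    & forall x y, gamma (x + y) <= gamma x + gamma y].

Definition unit_ball (gamma : V -> R) : set V := [set x | gamma x <= 1].

Definition dual_norm (gamma : V -> R) (p : V) : R :=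
  sup [set ip p x | x in unit_ball gamma].

Definition exposed_face (gamma : V -> R) (p : V) : set V :=
  [set x | unit_ball gamma x /\ ip p x = 1].

Definition Ncone (gamma : V -> R) (p : V) : set V :=
  if dual_norm gamma p == 1 then
    [set y | exists t : R, exists2 x, exposed_face gamma p x & 0 <= t /\ y = t *: x]
  else [set 0].

(* C_pi = \bigcap_{s in S} (s + N(p_s)), with pi : V -> V giving p_s *)
Definition Cpi (gamma : V -> R) (S : seq V) (pi : V -> V) : set V :=
  [set y | forall s, s \in S -> Ncone gamma (pi s) (y - s)].

Definition admissible (gamma : V -> R) (S : seq V) (pi : V -> V) : Prop :=
  forall s, s \in S -> dual_norm gamma (pi s) <= 1.

Definition bounded_set (A : set V) : Prop :=
  exists M : R, forall x, A x -> forall i, `|x ord0 i| <= M.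

(* elementary hull: union of all bounded (nonempty) elementary convex sets *)
Definition elem_hull (gamma : V -> R) (S : seq V) : set V :=
  [set m | exists pi : V -> V,
     [/\ admissible gamma S pi, Cpi gamma S pi !=set0,
         bounded_set (Cpi gamma S pi) & Cpi gamma S pi m]].

(* Fermat-Weber point of the weighted set (S,u), S duplicate-free *)
Definition FW_point (gamma : V -> R) (S : seq V) (u : V -> R) (m : V) : Prop :=
  forall x, \sum_(s <- S) u s * gamma (m - s) <= \sum_(s <- S) u s * gamma (x - s).

(* the weighted set (D,w) + (C,v): support D u C, weight w_x + v_x *)
Definition wsum_pts (D C : seq V) : seq V := undup (D ++ C).
Definition wsum_wt (D : seq V) (w : V -> R) (C : seq V) (v : V -> R) : V -> R :=
  fun x => (if x \in D then w x else 0) + (if x \in C then v x else 0).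

End Defs.

(* Main.v *)
Require Import Defs.
From HB Require Import structures.
From mathcomp Require Import all_boot all_order all_algebra.
From mathcomp Require Import classical_sets reals.
From mathcomp Require Import boolp topology normedtype matrix_normedtype derive.
From mathcomp Require Import ring lra.
Import Order.TTheory GRing.Theory Num.Theory.
Import numFieldTopology.Exports numFieldNormedType.Exports.
Set Implicit Arguments. Unset Strict Implicit.
Local Open Scope ring_scope.
Local Open Scope classical_set_scope.

Section Norm.
Variables (R : realType) (d : nat) (gamma : 'rV[R]_d -> R).
Hypothesis hg : is_norm gamma.

Lemma g0 : gamma 0 = 0.
Proof. case: hg => _ hZ _; by rewrite -(scale0r 0) hZ normr0 mul0r. Qed.

Lemma gN x : gamma (- x) = gamma x.
Proof. case: hg => _ hZ _; by rewrite -scaleN1r hZ normrN normr1 mul1r. Qed.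

Lemma gZ a x : gamma (a *: x) = `|a| * gamma x.
Proof. by case: hg. Qed.

Lemma gD x y : gamma (x + y) <= gamma x + gamma y.
Proof. by case: hg. Qed.

Lemma g_ge0 x : 0 <= gamma x.
Proof.
have := gD x (- x); rewrite subrr g0 gN => h.
by rewrite -(pmulr_rge0 _ (ltr0n R 2)) mulr2n mulrDl mul1r.
Qed.

Lemma gB x y : gamma x - gamma y <= gamma (x - y).
Proof. by rewrite lerBlDr; have := gD (x - y) y; rewrite subrK. Qed.

Lemma g_abs x y : `|gamma x - gamma y| <= gamma (x - y).
Proof.
rewrite ler_norml gB andbT lerBrDl.
have h := gB y x; rewrite -(opprB x y) gN in h; lra.
Qed.

Lemma g_sum (I : Type) (r : seq I) (F : I -> 'rV[R]_d) :
  gamma (\sum_(i <- r) F i) <= \sum_(i <- r) gamma (F i).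
Proof.
elim: r => [|a r IH]; first by rewrite !big_nil g0.
rewrite !big_cons; apply: le_trans (gD _ _) _; exact: lerD.
Qed.

Lemma coord_le (x : 'rV[R]_d) i : `|x ord0 i| <= `|x|.
Proof.
have /mapP[j Hj ->] : `|x ord0 i| \in [seq `|x k.1 k.2| | k : 'I_1 * 'I_d].
  by apply/mapP; exists (ord0, i) => //=; rewrite mem_enum.
by rewrite [leRHS]mx_normrE; apply/bigmax_geP; right => /=; exists j.
Qed.

Definition Kg := \sum_(i < d) gamma (delta_mx ord0 i).

Lemma Kg_ge0 : 0 <= Kg.
Proof. by apply: sumr_ge0 => i _; exact: g_ge0. Qed.

Lemma g_upper x : gamma x <= Kg * `|x|.
Proof.
rewrite {1}(matrix_sum_delta x) big_ord1.
apply: le_trans (g_sum _ _) _.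
rewrite /Kg mulr_suml; apply: ler_sum => i _.
by rewrite gZ mulrC ler_wpM2l ?g_ge0 ?coord_le.
Qed.

Lemma lip_cont (f : 'rV[R]_d -> R) (K : R) (x : 'rV[R]_d) : 0 <= K ->
  (forall y, `|f x - f y| <= K * `|x - y|) -> {for x, continuous f}.
Proof.
move=> K0 hf.
apply/(@cvgrPdist_lt R R^o 'rV[R]_d (nbhs x) (nbhs_filter x) f (f x)) => e e0.
apply/(@nbhs_normP R 'rV[R]_d).
have hK : 0 < K + 1 by lra.
exists (e / (K + 1)); first by rewrite /= divr_gt0.
move=> y /= hy.
apply: le_lt_trans (hf y) _.
rewrite -(ltr_pM2r hK) divfK ?gt_eqF // in hy.
have := normr_ge0 (x - y); nra.
Qed.

Lemma g_cont (x : 'rV[R]_d) : {for x, continuous gamma}.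
Proof.
apply: (@lip_cont gamma Kg x Kg_ge0) => y.
apply: le_trans (g_abs _ _) _; exact: g_upper.
Qed.

Lemma g_eq0 x : gamma x = 0 -> x = 0.
Proof. by case: hg => h _ _; exact: h. Qed.

Lemma bnd_of (A : set 'rV[R]_d) B : (forall x, A x -> `|x| <= B) ->
  bounded_set A.
Proof.
move=> hB; rewrite /= /bounded_near; near=> M => x Ax.
apply: le_trans (hB _ Ax) _; near: M; apply: nbhs_pinfty_ge.
by rewrite num_real.
Unshelve. all: by end_near. Qed.

Lemma nz_vec : (0 < d)%N -> exists x : 'rV[R]_d, x != 0.
Proof.
move=> d0; exists (const_mx 1); apply/negP => /eqP/rowP/(_ (Ordinal d0)).
by rewrite !mxE => /eqP; rewrite oner_eq0.
Qed.

Lemma g_lower : (0 < d)%N -> exists2 c, 0 < c & forall x, c * `|x| <= gamma x.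
Proof.
move=> d0.
pose S := [set x : 'rV[R]_d | `|x| = 1].
have S0 : S !=set0.
  have [x x0] := nz_vec d0.
  exists (`|x|^-1 *: x); rewrite /S /= normrZ ger0_norm ?invr_ge0 //.
  by rewrite mulVf // normr_eq0.
have Scl : closed S.
  have -> : S = (Num.norm : 'rV[R]_d -> R) @^-1` [set r | r = 1] by [].
  apply: preimage_closed; last exact: closed_eq.
  by move=> x _; exact: norm_continuous.
have Sc : compact S.
  by apply: bounded_closed_compact => //; apply: (@bnd_of _ 1) => x ->.
have [c0 /set_mem Sc0 hmin] := compact_EVT_min S0 Sc (continuous_subspaceT g_cont).
exists (gamma c0).
  rewrite lt_neqAle g_ge0 andbT; apply/eqP => h.
  move: Sc0; rewrite /S /= (g_eq0 (esym h)) normr0 => /eqP; by rewrite eq_sym oner_eq0.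
move=> x; have [->|x0] := eqVneq x 0; first by rewrite normr0 mulr0 g_ge0.
have nx : 0 < `|x| by rewrite normr_gt0.
have hS : (`|x|^-1 *: x) \in S.
  by rewrite inE /S /= normrZ ger0_norm ?invr_ge0 ?normr_ge0 // mulVf ?gt_eqF.
have := hmin _ hS; rewrite gZ ger0_norm ?invr_ge0 ?normr_ge0 //.
by rewrite ler_pdivlMl // mulrC.
Qed.

End Norm.

Section IP.
Variables (R : realType) (d : nat).
Implicit Types (p q x y : 'rV[R]_d).

Lemma ipE p x : ip p x = \sum_(i < d) p ord0 i * x ord0 i.
Proof. by []. Qed.

Lemma ipD p x y : ip p (x + y) = ip p x + ip p y.
Proof. by rewrite !ipE -big_split; apply: eq_bigr => i _; rewrite mxE mulrDr. Qed.

Lemma ipZ p a x : ip p (a *: x) = a * ip p x.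
Proof. by rewrite !ipE mulr_sumr; apply: eq_bigr => i _; rewrite mxE mulrCA. Qed.

Lemma ipN p x : ip p (- x) = - ip p x.
Proof. by rewrite -scaleN1r ipZ mulN1r. Qed.

Lemma ipB p x y : ip p (x - y) = ip p x - ip p y.
Proof. by rewrite ipD ipN. Qed.

Lemma ip0 p : ip p 0 = 0.
Proof. by rewrite -(scale0r 0) ipZ mul0r. Qed.

Lemma ipNl p x : ip (- p) x = - ip p x.
Proof. by rewrite !ipE -sumrN; apply: eq_bigr => i _; rewrite mxE mulNr. Qed.

Lemma ip_sumL (I : Type) (r : seq I) (c : I -> R) (P : I -> 'rV[R]_d) x :
  ip (\sum_(i <- r) c i *: P i) x = \sum_(i <- r) c i * ip (P i) x.
Proof.
elim: r => [|a r IH].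
  by rewrite !big_nil /ip; apply: big1 => i _; rewrite mxE mul0r.
rewrite !big_cons -IH !ipE mulr_sumr -big_split; apply: eq_bigr => i _.
by rewrite !mxE mulrDl mulrA.
Qed.

Definition Kp p := \sum_(i < d) `|p ord0 i|.

Lemma Kp_ge0 p : 0 <= Kp p.
Proof. by apply: sumr_ge0. Qed.

Lemma ip_bound p x : `|ip p x| <= Kp p * `|x|.
Proof.
rewrite !ipE /Kp mulr_suml; apply: le_trans (ler_norm_sum _ _ _) _.
apply: ler_sum => i _; rewrite normrM ler_wpM2l //; exact: coord_le.
Qed.

Lemma ip_cont p x : {for x, continuous (ip p)}.
Proof.
apply: (@lip_cont R d (ip p) (Kp p) x (Kp_ge0 p)) => y.
by rewrite -ipB ip_bound.
Qed.

End IP.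

Section Dual.
Variables (R : realType) (d : nat) (gamma : 'rV[R]_d -> R).
Hypothesis hg : is_norm gamma.
Hypothesis d0 : (0 < d)%N.
Implicit Types (p q x y : 'rV[R]_d).

Lemma ball_bnd : exists B, forall x, gamma x <= 1 -> `|x| <= B.
Proof.
have [c c0 hc] := g_lower hg d0.
exists c^-1 => x hx; rewrite -(ler_pM2l c0) mulfV ?gt_eqF //.
exact: le_trans (hc x) hx.
Qed.

Lemma dual_has_sup p : has_sup [set ip p x | x in unit_ball gamma].
Proof.
have [B hB] := ball_bnd.
split; first by exists (ip p 0), 0 => //; rewrite /unit_ball /= (g0 hg).
exists (Kp p * B) => _ [x hx <-].
apply: le_trans (ler_norm _) _; apply: le_trans (ip_bound _ _) _.
by rewrite ler_wpM2l ?Kp_ge0 // hB.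
Qed.

Lemma dual_ub p x : gamma x <= 1 -> ip p x <= dual_norm gamma p.
Proof.
move=> hx; apply: sup_upper_bound; first exact: dual_has_sup.
by exists x.
Qed.

Lemma dual_le1 p y : dual_norm gamma p <= 1 -> ip p y <= gamma y.
Proof.
move=> hp; have [->|y0] := eqVneq y 0; first by rewrite ip0 (g0 hg).
have gy : 0 < gamma y.
  rewrite lt_neqAle (g_ge0 hg) andbT; apply/eqP => h.
  by move: y0; rewrite (g_eq0 hg (esym h)) eqxx.
have hz : gamma ((gamma y)^-1 *: y) <= 1.
  rewrite (gZ hg) ger0_norm; last by rewrite invr_ge0 ltW.
  by rewrite mulVf // gt_eqF.
have := le_trans (dual_ub p hz) hp.
by rewrite ipZ ler_pdivrMl // mulr1.
Qed.

End Dual.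

Lemma sum_conv (R : realType) (d : nat) (D : seq 'rV[R]_d) (w : 'rV[R]_d -> R)
  (c : 'rV[R]_d) (v : R) (g : 'rV[R]_d -> R) : uniq D ->
  \sum_(s <- wsum_pts D [:: c]) wsum_wt D w [:: c] (fun _ => v) s * g s
  = \sum_(s <- D) w s * g s + v * g c.
Proof.
move=> hD.
rewrite /wsum_pts undup_cat /= big_cat /= big_cons big_nil addr0 big_filter (undup_id hD).
rewrite {2}/wsum_wt mem_seq1 eqxx.
have -> : \sum_(i <- D | i \notin [:: c]) wsum_wt D w [:: c] (fun=> v) i * g i
        = \sum_(i <- D | i != c) w i * g i.
  rewrite big_seq_cond [RHS]big_seq_cond; apply: eq_big => [i|i].
    by rewrite mem_seq1.
  by rewrite mem_seq1 /wsum_wt mem_seq1 => /andP[-> /negbTE ->]; rewrite addr0.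
case: (boolP (c \in D)) => hc.
  by rewrite (bigD1_seq c hc hD) /= mulrDl; lra.
rewrite add0r; congr (_ + _); rewrite big_seq_cond [RHS]big_seq.
apply: eq_bigl => i; case: (boolP (i \in D)) => //= hi.
by apply/negP => /eqP hic; move: hc; rewrite -hic hi.
Qed.

Lemma ray_zero (R : realType) (d : nat) (A : set 'rV[R]_d) (m v : 'rV[R]_d) :
  Defs.bounded_set A -> (forall u, 0 <= u -> A (m + u *: v)) -> v = 0.
Proof.
move=> [M hM] hA; apply/rowP => i; rewrite mxE.
apply/eqP; apply: contraT => vi0.
have nv : 0 < `|v ord0 i| by rewrite normr_gt0.
pose u := (`|M| + `|m ord0 i| + 1) / `|v ord0 i|.
have u0 : 0 <= u.
  apply: divr_ge0; last exact: normr_ge0.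
  have := normr_ge0 M; have := normr_ge0 (m ord0 i); lra.
have hM0 := normr_ge0 M.
have := hM _ (hA u u0) i; rewrite !mxE => h.
have hu : `|u * v ord0 i| = `|M| + `|m ord0 i| + 1.
  by rewrite normrM (ger0_norm u0) /u divfK ?gt_eqF.
have t : `|u * v ord0 i| <= `|m ord0 i + u * v ord0 i| + `|m ord0 i|.
  have e : m ord0 i + u * v ord0 i + - m ord0 i = u * v ord0 i by ring.
  by have := ler_normD (m ord0 i + u * v ord0 i) (- m ord0 i); rewrite normrN e.
have := ler_norm M; lra.
Qed.

Section Main.
Variables (R : realType) (d : nat) (gamma : 'rV[R]_d -> R).
Hypothesis hg : is_norm gamma.
Hypothesis d0 : (0 < d)%N.
Variables (D : seq 'rV[R]_d) (pi : 'rV[R]_d -> 'rV[R]_d) (m : 'rV[R]_d).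
Hypothesis adm : admissible gamma D pi.
Hypothesis Cm : Cpi gamma D pi m.

Lemma F1 s : s \in D -> ip (pi s) (m - s) = gamma (m - s).
Proof.
move=> hs; have := Cm hs; rewrite /Ncone.
case: eqP => [h1 | _]; last by move=> ->; rewrite ip0 (g0 hg).
move=> [t [x [hxb hxi] [t0 ->]]].
rewrite ipZ hxi mulr1 (gZ hg) ger0_norm //.
suff -> : gamma x = 1 by rewrite mulr1.
apply: le_anti; rewrite hxb /= -{1}hxi.
by apply: (dual_le1 hg d0); rewrite h1.
Qed.

Lemma ray (z : 'rV[R]_d) : gamma z <= 1 -> (forall s, s \in D -> ip (pi s) z = 1) ->
  forall u, 0 <= u -> Cpi gamma D pi (m + u *: z).
Proof.
move=> gz hz u u0 s hs.
have h1 : dual_norm gamma (pi s) = 1.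
  apply: le_anti; rewrite adm //= -(hz s hs).
  exact: (dual_ub hg d0).
have := Cm hs; rewrite /Ncone h1 eqxx.
move=> [t [x [hxb hxi] [t0 hms]]].
have [tu0|tu0] := eqVneq (t + u) 0.
  have t00 : t = 0 by lra.
  have u00 : u = 0 by lra.
  exists 0, z; first by split; [exact: gz | exact: hz].
  by split => //; rewrite u00 !scale0r addr0 hms t00 scale0r.
have tup : 0 < t + u by rewrite lt_neqAle eq_sym tu0 addr_ge0.
exists (t + u), ((t + u)^-1 *: (t *: x + u *: z)).
  split => /=.
    rewrite /unit_ball /= (gZ hg) ger0_norm; last by rewrite invr_ge0 ltW.
    rewrite ler_pdivrMl // mulr1; apply: le_trans (gD hg _ _) _.
    rewrite !(gZ hg) !ger0_norm //; move: hxb; rewrite /unit_ball /= => hxb.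
    by rewrite -[X in _ <= X]addr0; nra.
  by rewrite ipZ ipD !ipZ hxi hz // !mulr1 mulVf // gt_eqF.
split; first exact: ltW.
rewrite scalerA mulfV ?gt_eqF // scale1r -hms; by rewrite addrAC.
Qed.

End Main.

Lemma sum_pos_eq (R : realType) (d : nat) (D : seq 'rV[R]_d) (F : 'rV[R]_d -> R) :
  uniq D -> (forall s, s \in D -> 0 <= F s) -> \sum_(s <- D) F s <= 0 ->
  forall s, s \in D -> F s = 0.
Proof.
move=> hD hF hS s hs; apply: le_anti; rewrite hF // andbT.
apply: le_trans hS; rewrite (bigD1_seq s hs hD) /= lerDl.
by rewrite big_seq_cond; apply: sumr_ge0 => i /andP[hi _]; exact: hF.
Qed.

Unset Implicit Arguments.

Theorem mainTheorem11 (R : realType) (d : nat) (gamma : 'rV[R]_d -> R)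
  (D : seq 'rV[R]_d) (w : 'rV[R]_d -> R) :
  (0 < d)%N -> is_norm gamma -> uniq D -> (forall s, s \in D -> 0 < w s) ->
  forall m, elem_hull gamma D m ->
  exists (c : 'rV[R]_d) (wc : R),
    [/\ 0 < wc, wc < \sum_(s <- D) w s &
        FW_point gamma (wsum_pts D [:: c])
                 (wsum_wt D w [:: c] (fun _ => wc)) m].
Proof.
move=> d0 hg hD hw m [pi [adm _ bnd Cm]].
have [s0 hs0] : exists s0, s0 \in D.
  case: D hD hw adm Cm bnd => [|s0 D'] _ _ _ _ bnd; last by exists s0; rewrite mem_head.
  have [v v0] := nz_vec R d0.
  have h := ray_zero (m := m) (v := v) bnd.
  have : v = 0 by apply: h => u _ s; rewrite in_nil.
  by move/eqP; rewrite (negbTE v0).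
pose q := \sum_(s <- D) w s *: pi s.
pose B := [set y : 'rV[R]_d | gamma y <= 1].
have B0 : B !=set0 by exists 0; rewrite /B /= (g0 hg).
have Bc : compact B.
  apply: bounded_closed_compact.
    have [Bd hBd] := ball_bnd hg d0; exact: (@bnd_of _ _ _ Bd).
  have -> : B = gamma @^-1` [set r | r <= 1] by [].
  apply: preimage_closed; last exact: closed_le.
  by move=> x _; exact: (g_cont hg).
have [ys /set_mem hys hmax] := compact_EVT_max B0 Bc
  (continuous_subspaceT (fun x => @ip_cont _ _ (- q) x)).
pose k := ip (- q) ys.
have k0 : 0 <= k.
  by rewrite -(ip0 (- q)); apply: hmax; rewrite inE /B /= (g0 hg).
have hk : forall y, ip (- q) y <= k * gamma y.
  move=> y; have [->|y0] := eqVneq y 0; first by rewrite ip0 (g0 hg) mulr0.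
  have gy : 0 < gamma y.
    rewrite lt_neqAle (g_ge0 hg) andbT; apply/eqP => h.
    by move: y0; rewrite (g_eq0 hg (esym h)) eqxx.
  have hz : (gamma y)^-1 *: y \in B.
    rewrite inE /B /= (gZ hg) ger0_norm; last by rewrite invr_ge0 ltW.
    by rewrite mulVf // gt_eqF.
  have := hmax _ hz; rewrite ipZ ler_pdivrMl //; by rewrite mulrC.
have klt : k < \sum_(s <- D) w s.
  rewrite ltNge; apply/negP => hle.
  pose z := - ys.
  have gz : gamma z <= 1 by rewrite /z (gN hg).
  have hkz : k = \sum_(s <- D) w s * ip (pi s) z.
    by rewrite /k /z ipNl -ipN ip_sumL.
  have hle1 : forall s, s \in D -> ip (pi s) z <= 1.
    move=> s hs; apply: le_trans _ gz; apply: (dual_le1 hg d0); exact: adm.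
  have hz1 : forall s, s \in D -> ip (pi s) z = 1.
    move=> s hs.
    have hF : forall s, s \in D -> 0 <= w s * (1 - ip (pi s) z).
      move=> s' hs'; apply: mulr_ge0; [exact: ltW (hw _ hs') | rewrite subr_ge0; exact: hle1].
    have hS : \sum_(s <- D) w s * (1 - ip (pi s) z) <= 0.
      under eq_bigr do rewrite mulrBr mulr1.
      rewrite sumrB -hkz; lra.
    have := sum_pos_eq hD hF hS hs => /eqP; rewrite mulf_eq0 (gt_eqF (hw _ hs)) /=.
    by rewrite subr_eq0 => /eqP <-.
  have hray : forall u, 0 <= u -> Cpi gamma D pi (m + u *: z).
    exact: (ray hg d0 adm Cm gz hz1).
  have z0 := ray_zero bnd hray.
  by have := hz1 s0 hs0; rewrite z0 ip0 => /eqP; rewrite eq_sym oner_eq0.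
set wD := \sum_(s <- D) w s in klt *.
exists m; exists ((k + wD) / 2); split; [lra | lra |].
move=> x; rewrite !sum_conv // subrr (g0 hg) mulr0 addr0.
have h1 : \sum_(s <- D) w s * gamma (m - s) + ip q (x - m)
          <= \sum_(s <- D) w s * gamma (x - s).
  rewrite /q ip_sumL -big_split /= big_seq [X in _ <= X]big_seq.
  apply: ler_sum => s hs; rewrite -mulrDr; apply: ler_wpM2l; first exact: ltW (hw _ hs).
  rewrite -(F1 hg d0 Cm hs) -ipD addrC subrKA.
  apply: (dual_le1 hg d0); exact: adm.
have h2 : - ip q (x - m) <= (k + wD) / 2 * gamma (x - m).
  rewrite -ipNl; apply: le_trans (hk _) _.
  rewrite ler_wpM2r ?(g_ge0 hg) //; lra.
lra.
Qed.
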